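(* Let $\mathbb{A}\in\mathbb{C}^{n\times n}$, $\mathbf{f}_1\in\mathbb{C}^n$, and $\mathbf{f}_{i+1}=\mathbb{A}\mathbf{f}_i$ for $i=1,\dots,m$. Assume $\mathbf{X}_m=(\mathbf{f}_1,\dots,\mathbf{f}_m)\in\mathbb{C}^{n\times m}$ has full column rank, and let $\mathcal{K}_m=\operatorname{span}\{\mathbf{f}_1,\dots,\mathbf{f}_m\}$. Let $\mathbf{c}=(c_1,\dots,c_m)^T=\mathbf{X}_m^{\dagger}\mathbf{f}_{m+1}$ (the least squares coefficients) and $\mathbf{r}_{m+1}=\mathbf{f}_{m+1}-\mathbf{X}_m\mathbf{c}$. Let $C_m$ be the $m\times m$ companion matrix with ones on the first subdiagonal, last column equal to $\mathbf{c}$, and zeros elsewhere, so that $\mathbb{A}\mathbf{X}_m=\mathbf{X}_mC_m+\mathbf{r}_{m+1}\mathbf{e}_m^T$ with $\mathbf{e}_m=(0,\dots,0,1)^T$. Assume the eigenvalues $\lambda_1,\dots,\lambda_m$ of $C_m$ are pairwise distinct, and let $\mathbb{V}_m=(\lambda_i^{j-1})_{i,j=1}^m$ be the corresponding Vandermonde matrix. Then the columns of $\widehat{W}_m=\mathbf{X}_m\mathbb{V}_m^{-1}$ are Ritz vectors of $\mathbb{A}$ with respect to $\mathcal{K}_m$, the $j$-th column $\widehat{W}_m(:,j)$ having Ritz value $\lambda_j$, and for each $j=1,\dots,m$, $$\frac{\|\mathbb{A}\widehat{W}_m(:,j)-\lambda_j\widehat{W}_m(:,j)\|_2}{\|\widehat{W}_m(:,j)\|_2}=\frac{\|\mathbf{r}_{m+1}\|_2}{\|\widehat{W}_m(:,j)\|_2}\prod_{k=1,k\neq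 j}^m\frac{1}{|\lambda_j-\lambda_k|}.$$
   Context: $\mathbf{X}_m^\dagger$ denotes the Moore–Penrose pseudoinverse, so $\mathbf{X}_m^*\mathbf{r}_{m+1}=0$. A pair $(\lambda,w)$ with $0\neq w\in\mathcal{K}_m$ is a Ritz pair (Ritz value $\lambda$, Ritz vector $w$) of $\mathbb{A}$ with respect to $\mathcal{K}_m$ if $\mathbb{A}w-\lambda w$ is orthogonal to $\mathcal{K}_m$, i.e. $\lambda$ is an eigenvalue of the Rayleigh quotient $\mathbf{X}_m^\dagger\mathbb{A}\mathbf{X}_m=C_m$ and $w=\mathbf{X}_m y$ for a corresponding eigenvector $y$. *)

(* Defs.v *)
(* Complex numbers: an arbitrary numClosedFieldType C
   (e.g. algC, or complex R for a real closed field R). *)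
From HB Require Import structures.
From mathcomp Require Import all_boot all_order all_algebra.
Set Implicit Arguments. Unset Strict Implicit. Unset Printing Implicit Defensive.
Import Order.TTheory GRing.Theory Num.Theory.
Local Open Scope ring_scope.

Section Defs.
Variable C : numClosedFieldType.

Definition ctrmx (p q : nat) (M : 'M[C]_(p, q)) : 'M[C]_(q, p) :=
  (map_mx Num.conj M)^T.

Definition moore_penrose (p q : nat) (X : 'M[C]_(p, q)) (Y : 'M[C]_(q, p)) :=
  [/\ X *m Y *m X = X, Y *m X *m Y = Y,
      ctrmx (X *m Y) = X *m Y & ctrmx (Y *m X) = Y *m X].

(* Krylov matrix X_m = (f_1, A f_1, ..., A^(m-1) f_1); column j (0-based) is A^j f_1 *)
Definition krylov_mx (n m : nat) (A : 'M[C]_n) (f1 : 'cV[C]_n) : 'M[C]_(n, m) :=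
  \matrix_(i < n, j < m) ((A ^+ j) *m f1) i 0.

Definition companion_mx (m : nat) (c : 'cV[C]_m) : 'M[C]_m :=
  \matrix_(i < m, j < m)
    (if j.+1 == m then c i 0 else ((i : nat) == j.+1)%:R).

Definition vandermonde_mx (m : nat) (lam : 'I_m -> C) : 'M[C]_m :=
  \matrix_(i < m, j < m) (lam i ^+ j).

Definition cinner (n : nat) (v u : 'cV[C]_n) : C :=
  \sum_(i < n) (v i 0)^* * u i 0.

Definition norm2 (n : nat) (v : 'cV[C]_n) : C :=
  sqrtC (\sum_(i < n) `|v i 0| ^+ 2).

Definition in_colspace (n m : nat) (X : 'M[C]_(n, m)) (w : 'cV[C]_n) : Prop :=
  exists y : 'cV[C]_m, w = X *m y.

Definition ritz_pair (n m : nat) (A : 'M[C]_n) (X : 'M[C]_(n, m))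
    (lam : C) (w : 'cV[C]_n) : Prop :=
  [/\ w != 0, in_colspace X w &
      forall v, in_colspace X v -> cinner v (A *m w - lam *: w) = 0].

End Defs.

(* Main.v *)
Require Import Defs.
From HB Require Import structures.
From mathcomp Require Import all_boot all_order all_algebra.
From mathcomp Require Import zify.
Import Order.TTheory GRing.Theory Num.Theory.
Local Open Scope ring_scope.

Lemma vdm_unit (F : fieldType) (m : nat) (lam : 'I_m -> F) :
  injective lam ->
  \matrix_(i < m, j < m) (lam i ^+ j) \in unitmx.
Proof.
move=> inj.
have -> : \matrix_(i < m, j < m) (lam i ^+ j) = (Vandermonde m (\row_i lam i))^T.
  by apply/matrixP => i j; rewrite !mxE.
rewrite unitmxE det_tr det_Vandermonde unitfE.
apply/prodf_neq0 => i _; apply/prodf_neq0 => k ik.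
rewrite !mxE subr_eq0; apply/eqP => /inj eki.
by move: ik; rewrite eki ltnn.
Qed.

Lemma vdm_last (F : fieldType) (m : nat) (lam : 'I_m.+1 -> F) (j : 'I_m.+1) :
  injective lam ->
  invmx (\matrix_(i < m.+1, k < m.+1) (lam i ^+ k)) ord_max j
   * \prod_(k < m.+1 | k != j) (lam j - lam k) = 1.
Proof.
move=> inj.
set V := \matrix_(i < m.+1, k < m.+1) (lam i ^+ k).
have Vu : V \in unitmx := @vdm_unit _ _ _ inj.
set y := invmx V.
have Hy : forall i, \sum_(k < m.+1) lam i ^+ k * y k j = (i == j)%:R.
  move=> i; have := congr1 (fun M : 'M[F]_m.+1 => M i j) (mulmxV Vu).
  rewrite !mxE => <-; apply: eq_bigr => k _; rewrite mxE.
  by [].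
set p : {poly F} := \poly_(k < m.+1) y (inord k) j.
set q : {poly F} := \prod_(k < m.+1 | k != j) ('X - (lam k)%:P).
have hp : forall i, p.[lam i] = (i == j)%:R.
  move=> i; rewrite horner_poly -Hy; apply: eq_bigr => k _.
  by rewrite inord_val mulrC.
have sq : size q = m.+1.
  rewrite /q size_prod; last by move=> k _; rewrite polyXsubC_eq0.
  rewrite (eq_bigr (fun _ => 2%N)); last by move=> k _; rewrite size_XsubC.
  rewrite sum_nat_const cardC1 card_ord /=.
  lia.
have qj : q.[lam j] = \prod_(k < m.+1 | k != j) (lam j - lam k).
  by rewrite /q horner_prod; apply: eq_bigr => k _; rewrite hornerXsubC.
have hq : forall i, i != j -> q.[lam i] = 0.
  move=> i ij; rewrite /q horner_prod (bigD1 i) //= hornerXsubC subrr mul0r //.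
set p' := q.[lam j] *: p - q.
have p'0 : p' = 0.
  apply/eqP; apply: contraT => nz.
  have := max_poly_roots nz (rs := [seq lam i | i <- enum 'I_m.+1]).
  rewrite size_map size_enum_ord.
  have -> : all (root p') [seq lam i | i <- enum 'I_m.+1].
    apply/allP => x /mapP [i _ ->]; rewrite /root /p' hornerD hornerN hornerZ hp.
    case: (eqVneq i j) => [->|ij]; first by rewrite mulr1 subrr.
    by rewrite (hq i ij) mulr0 subrr.
  rewrite map_inj_uniq ?enum_uniq //.
  move=> /(_ isT isT); apply: contraLR => _; rewrite -leqNgt.
  apply: leq_trans (size_polyD _ _) _; rewrite size_polyN sq geq_max leqnn andbT.
  exact: leq_trans (size_scale_leq _ _) (size_poly _ _).
have := congr1 (fun r : {poly F} => r`_m) p'0.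
rewrite /p' coefB coefZ coef_poly ltnSn coef0.
have -> : q`_m = 1.
  by have := monic_prod_XsubC (index_enum 'I_m.+1) (fun k => k != j) lam;
    rewrite -/q monicE lead_coefE sq => /eqP.
move/eqP; rewrite subr_eq0 => /eqP.
have -> : (inord m : 'I_m.+1) = ord_max by apply: val_inj; rewrite /= inordK.
by rewrite qj mulrC.
Qed.

Lemma sum_delta (F : nzRingType) (k : nat) (f : 'I_k -> F) (x : 'I_k) :
  \sum_(l < k) f l * ((l : nat) == (x : nat))%:R = f x.
Proof.
rewrite (bigD1 x) //= eqxx mulr1 big1 ?addr0 // => l lx.
by rewrite (_ : ((l : nat) == x) = false) ?mulr0 //; apply/negbTE.
Qed.

Lemma ctrmxM (C : numClosedFieldType) p q r (M : 'M[C]_(p, q)) (N : 'M[C]_(q, r)) :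
  ctrmx (M *m N) = ctrmx N *m ctrmx M.
Proof. by rewrite /ctrmx map_mxM trmx_mul. Qed.

Lemma ctrmxK (C : numClosedFieldType) p q (M : 'M[C]_(p, q)) :
  ctrmx (ctrmx M) = M.
Proof. by apply/matrixP => i k; rewrite /ctrmx !mxE conjCK. Qed.

Lemma root_fact (C : fieldType) m (c : 'cV[C]_m.+1) (a : C) :
  eigenvalue (\matrix_(i < m.+1, j < m.+1)
    (if j.+1 == m.+1 then c i 0 else ((i : nat) == j.+1)%:R)) a ->
  a ^+ m.+1 = \sum_(l < m.+1) c l 0 * a ^+ l.
Proof.
move=> /eigenvalueP [u hu unz].
have step : forall k (hk : (k < m)%N), u 0 (inord k.+1) = a * u 0 (inord k).
  move=> k hk; have := congr1 (fun M : 'rV[C]_m.+1 => M 0 (inord k)) hu.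
  rewrite !mxE => <-.
  have -> : \sum_j u 0 j * (\matrix_(i < m.+1, j0 < m.+1)
    (if j0.+1 == m.+1 then c i 0 else ((i : nat) == j0.+1)%:R)) j (inord k)
    = \sum_j u 0 j * ((j : nat) == ((inord k.+1 : 'I_m.+1) : nat))%:R.
    apply: eq_bigr => l _; rewrite mxE inordK; last by lia.
    rewrite inordK; last by lia.
    by rewrite (_ : (k.+1 == m.+1) = false) //; apply/negbTE; lia.
  by rewrite sum_delta.
have hk : forall k (hk : (k < m.+1)%N), u 0 (inord k) = a ^+ k * u 0 0.
  elim=> [|k IH] hk.
    by rewrite expr0 mul1r; congr (u 0 _); apply: val_inj; rewrite /= inordK.
  by rewrite step ?IH ?exprS ?mulrA //; lia.
have u0 : u 0 0 != 0.
  apply: contraNneq unz => u00; apply/eqP/rowP => k.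
  rewrite mxE -(inord_val k) hk // u00 mulr0 //.
have := congr1 (fun M : 'rV[C]_m.+1 => M 0 ord_max) hu.
rewrite !mxE.
have -> : \sum_j u 0 j * (\matrix_(i < m.+1, j0 < m.+1)
    (if j0.+1 == m.+1 then c i 0 else ((i : nat) == j0.+1)%:R)) j ord_max
    = \sum_j (c j 0 * a ^+ j) * u 0 0.
  apply: eq_bigr => l _; rewrite mxE /= eqxx -(inord_val l) hk //.
  by rewrite inord_val mulrC mulrA.
rewrite -mulr_suml -(inord_val ord_max) hk // mulrA => /(mulIf u0) ->.
by rewrite exprS.
Qed.

Theorem mainTheorem1 (C : numClosedFieldType) (n m : nat)
    (A : 'M[C]_n) (f1 : 'cV[C]_n) (Xdag : 'M[C]_(m, n)) (lam : 'I_m -> C) :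
  let X := krylov_mx m A f1 in
  let fm1 := (A ^+ m) *m f1 in
  \rank X = m ->
  moore_penrose X Xdag ->
  let c := Xdag *m fm1 in
  let r := fm1 - X *m c in
  let Cm := companion_mx c in
  char_poly Cm = \prod_(i < m) ('X - (lam i)%:P) ->
  injective lam ->
  let W := X *m invmx (vandermonde_mx lam) in
  forall j : 'I_m,
    ritz_pair A X (lam j) (col j W) /\
    norm2 (A *m col j W - lam j *: col j W) / norm2 (col j W)
    = norm2 r / norm2 (col j W) *
      \prod_(k < m | k != j) (1 / `|lam j - lam k|).
Proof.
case: m Xdag lam => [|m] Xdag lam; first by move=> ? ? ? ? ? ? ? ? ? ? [] [].
move=> X fm1 rkX [mp1 mp2 mp3 mp4] c r Cm hchar inj W j.
set V := vandermonde_mx lam.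
have Vu : V \in unitmx := @vdm_unit _ _ _ inj.
set Vi := invmx V.
have F1 : forall i, lam i ^+ m.+1 = \sum_(l < m.+1) c l 0 * lam i ^+ l.
  move=> i; apply: root_fact.
  rewrite eigenvalue_root_char.
  have -> : char_poly (\matrix_(i0, j0) (if j0.+1 == m.+1 then c i0 0
       else (i0 == j0.+1 :> nat)%:R)) = char_poly Cm by [].
  by rewrite hchar /root horner_prod (bigD1 i) //= hornerXsubC subrr mul0r.
have F2 : A *m X = X *m Cm + r *m delta_mx 0 ord_max.
  apply/matrixP => a b.
  have colX : forall l (k : 'I_m.+1), X l k = (A ^+ k *m f1) l 0 by move=> l k; rewrite mxE.
  rewrite !mxE.
  have -> : \sum_j0 A a j0 * X j0 b = (A ^+ b.+1 *m f1) a 0.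
    rewrite exprS -mulmxA mxE; apply: eq_bigr => l _; by rewrite colX.
  rewrite big_ord1 !mxE eqxx /=.
  case: (eqVneq b ord_max) => [->|bm].
    rewrite mulr1.
    have -> : \sum_j0 X a j0 * Cm j0 ord_max = \sum_j0 X a j0 * c j0 0.
      by apply: eq_bigr => l _; rewrite !mxE /= eqxx.
    by rewrite addrC subrK.
  rewrite mulr0 addr0.
  have bm' : (b < m)%N by move: (ltn_ord b) bm; rewrite -val_eqE /=; lia.
  have -> : \sum_j0 X a j0 * Cm j0 b
      = \sum_j0 X a j0 * ((j0 : nat) == ((inord b.+1 : 'I_m.+1) : nat))%:R.
    apply: eq_bigr => l _; rewrite !mxE inordK; last by lia.
    by rewrite (_ : (b.+1 == m.+1) = false) //; apply/negbTE; lia.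
  rewrite sum_delta !mxE inordK //; lia.
have F3 : V *m Cm = diag_mx (\row_i lam i) *m V.
  apply/matrixP => a b; rewrite mul_diag_mx !mxE -exprS.
  case: (eqVneq b ord_max) => [->|bm].
    rewrite /= F1; apply: eq_bigr => l _; rewrite !mxE /= eqxx mulrC.
    by [].
  have bm' : (b < m)%N by move: (ltn_ord b) bm; rewrite -val_eqE /=; lia.
  have -> : \sum_j0 V a j0 * Cm j0 b
      = \sum_j0 V a j0 * ((j0 : nat) == ((inord b.+1 : 'I_m.+1) : nat))%:R.
    apply: eq_bigr => l _; rewrite !mxE inordK; last by lia.
    by rewrite (_ : (b.+1 == m.+1) = false) //; apply/negbTE; lia.
  by rewrite sum_delta mxE inordK //; lia.
have F4 : ctrmx X *m r = 0.
  have e1 : ctrmx X *m X *m Xdag = ctrmx X.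
    by rewrite -mulmxA -mp3 -ctrmxM mp1.
  by rewrite /r /c mulmxBr !mulmxA e1 subrr.
set D := diag_mx (\row_i lam i).
have CV : Cm *m Vi = Vi *m D.
  have : Vi *m (V *m Cm) *m Vi = Vi *m (D *m V) *m Vi by rewrite F3.
  rewrite !mulmxA mulVmx // mul1mx => ->.
  by rewrite -[Vi *m D *m V *m Vi]mulmxA mulmxV // mulmx1.
have AW : A *m W = W *m D + r *m (delta_mx 0 ord_max *m Vi).
  by rewrite /W mulmxA F2 mulmxDl -!mulmxA CV.
have Dd : D *m (delta_mx j 0 : 'cV[C]_m.+1) = lam j *: (delta_mx j 0 : 'cV[C]_m.+1).
  apply/matrixP => x y; rewrite mul_diag_mx !mxE.
  by case: (eqVneq x j) => [->|]; rewrite ?mulr1 ?mulr0.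
set a := Vi ord_max j.
have Eres : A *m col j W - lam j *: col j W = a *: r.
  rewrite colE mulmxA AW mulmxDl -mulmxA Dd -scalemxAr addrAC subrr add0r -mulmxA.
  rewrite -rowE -colE -mul_mx_scalar; congr (r *m _).
  by apply/matrixP => x y; rewrite !ord1 !mxE eqxx mulr1n.
rewrite Eres.
have wX : col j W = X *m col j Vi by rewrite /W !colE mulmxA.
split.
  split.
  - rewrite wX; apply/eqP => h.
    have rf : row_free X^T by rewrite /row_free mxrank_tr rkX.
    have : (col j Vi)^T *m X^T = 0 *m X^T by rewrite -trmx_mul h trmx0 mul0mx.
    move/(row_free_inj rf)/eqP; rewrite trmx_eq0 => /eqP hc.
    have : V *m col j Vi = delta_mx j 0 by rewrite colE mulmxA mulmxV // mul1mx.
    rewrite hc mulmx0 => /matrixP /(_ j 0); rewrite !mxE !eqxx => /eqP.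
    by rewrite eq_sym oner_eq0.
  - by exists (col j Vi).
  - move=> v [y ->]; rewrite /cinner.
    rewrite Eres.
    have -> : \sum_(i < n) ((X *m y) i 0)^* * (a *: r) i 0
        = (ctrmx (X *m y) *m (a *: r)) 0 0.
      by rewrite mxE; apply: eq_bigr => i _; rewrite !mxE.
    by rewrite ctrmxM -mulmxA -scalemxAr F4 scaler0 mulmx0 mxE.
have nZ : norm2 (a *: r) = `|a| * norm2 r.
  rewrite /norm2.
  under eq_bigr => i _ do rewrite mxE normrM exprMn.
  rewrite -mulr_sumr sqrtCM ?sqrCK // nnegrE ?exprn_ge0 //.
  by apply: sumr_ge0 => i _; rewrite exprn_ge0.
have Qnz : \prod_(k < m.+1 | k != j) (lam j - lam k) != 0.
  apply/prodf_neq0 => k kj; rewrite subr_eq0; apply: contra kj => /eqP /inj ->.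
  by [].
have ha : `|a| = \prod_(k < m.+1 | k != j) (1 / `|lam j - lam k|).
  have h := @vdm_last _ _ _ j inj.
  have -> : a = (\prod_(k < m.+1 | k != j) (lam j - lam k))^-1.
    by apply: (mulIf Qnz); rewrite mulVf //; exact: h.
  rewrite normfV normr_prod -prodfV; apply: eq_bigr => k _; by rewrite div1r.
by rewrite nZ ha [RHS]mulrC mulrA.
Qed.
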